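(* Let $\mathcal{R}$ be a cell space, let $A\subseteq M$, let $e\in G/G_0$, and let $E,E'\subseteq G/G_0$. Then: (1) $A^{-\{G_0\}}=A$, $A^{+\{G_0\}}=A$, and $\partial_{\{G_0\}}A=\emptyset$. (2) $A^{-\{G_0,e\}}=A\cap(\cdot\triangleleft e)^{-1}(A)$, $A^{+\{G_0,e\}}=A\cup(\cdot\triangleleft e)^{-1}(A)$, and $\partial_{\{G_0,e\}}A=(A\setminus(\cdot\triangleleft e)^{-1}(A))\cup((\cdot\triangleleft e)^{-1}(A)\setminus A)$. (3) $(M\setminus A)^{-E}=M\setminus A^{+E}$ and $(M\setminus A)^{+E}=M\setminus A^{-E}$. (4) If $E\subseteq E'$, then $A^{-E}\supseteq A^{-E'}$, $A^{+E}\subseteq A^{+E'}$, and $\partial_E A\subseteq\partial_{E'}A$. (5) If $G_0\in E$, then $A^{-E}\subseteq A\subseteq A^{+E}$. (6) If $G_0\in E$ and $A$ is finite, then $A^{-E}$ is finite. (7) If $G_0$, $A$ and $E$ are finite, then $A^{+E}$ and $\partial_E A$ are finite; more precisely $|A^{+E}|\leq|G_0|\cdot|A|\cdot|E|$. (8) If $g\in G$ and $G_0\cdot E\subseteq E$, then $g\triangleright A^{-E}=(g\triangleright A)^{-E}$, $g\triangleright A^{+E}=(g\triangleright A)^{+E}$, and $g\triangleright\partial_E A=\partial_E(g\triangleright A)$. (9) If $m\in M$, $G_0\cdot E\subseteq E$, and $\iota\colon M\to G/G_0$, $m'\mapsto G_{m_0,m'}$, then $m\triangleleft\iota(A^{-E})=(m\triangleleft\iota(A))^{-E}$,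 $m\triangleleft\iota(A^{+E})=(m\triangleleft\iota(A))^{+E}$, and $m\triangleleft\iota(\partial_E A)=\partial_E(m\triangleleft\iota(A))$.
   Context: A cell space $\mathcal{R}$ consists of a group $G$ acting transitively on the left on a nonempty set $M$ via $\triangleright$, a point $m_0\in M$ and a family $(g_{m_0,m})_{m\in M}$ in $G$ with $g_{m_0,m}\triangleright m_0=m$. $G_0$ is the stabiliser of $m_0$, $G/G_0$ the set of left cosets, with $G$ acting by $g\cdot hG_0=ghG_0$ (so $G_0\cdot E=\{g_0\cdot e:g_0\in G_0,e\in E\}$). For $m,m'\in M$, $G_{m_0,m'}=\{g\in G: g\triangleright m_0=m'\}$ (a left coset of $G_0$). The right semi-action $\triangleleft\colon M\times G/G_0\to M$ is $m\triangleleft gG_0=g_{m_0,m}g\triangleright m_0$; for $E\subseteq G/G_0$, $m\triangleleft E=\{m\triangleleft e:e\in E\}$, $(\cdot\triangleleft e)^{-1}(A)=\{m\in M: m\triangleleft e\in A\}$, and $g\triangleright A=\{g\triangleright a:a\in A\}$. For $A\subseteq M$ and $E\subseteq G/G_0$: $A^{-E}=\{m\in M: m\triangleleft E\subseteq A\}$, $A^{+E}=\{m\in M:(m\triangleleft E)\cap A\neq\emptyset\}$, $\partial_E A=A^{+E}\setminus A^{-E}$. *)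

(* Defs.v *)
From HB Require Import structures.
From mathcomp Require Import all_boot monoid.
From mathcomp Require Import finmap boolp classical_sets cardinality.
Set Implicit Arguments. Unset Strict Implicit. Unset Printing Implicit Defensive.
Local Open Scope classical_set_scope.
Local Open Scope group_scope.

Record cell_space (G : groupType) := CellSpace {
  cs_M : Type;
  cs_act : G -> cs_M -> cs_M;
  cs_act1 : forall m, cs_act 1 m = m;
  cs_actM : forall g h m, cs_act (g * h) m = cs_act g (cs_act h m);
  cs_transitive : forall m m', exists g, cs_act g m = m';
  cs_m0 : cs_M;
  cs_gsel : cs_M -> G;
  cs_gselP : forall m, cs_act (cs_gsel m) cs_m0 = m
}.

Section CellSpaceDefs.
Variables (G : groupType) (R : cell_space G).
Local Notation M := (@cs_M G R).
Local Notation act := (@cs_act G R).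
Local Notation m0 := (@cs_m0 G R).

Definition stab : set G := [set g | act g m0 = m0].

Definition lcoset (g : G) : set G := [set g * h | h in stab].

Definition coset := {C : set G | exists g, C = lcoset g}.

Definition coset_of (g : G) : coset := exist _ (lcoset g) (ex_intro _ g erefl).

Lemma stab_coset : exists g, stab = lcoset g.
Proof.
exists 1; apply/seteqP; split => x /=.
  by move=> hx; exists x => //; rewrite mul1g.
by case=> h hh <-; rewrite mul1g.
Qed.
Definition G0 : coset := exist _ stab stab_coset.

Definition crep (C : coset) : G := projT1 (cid (proj2_sig C)).

Lemma cact_proof (g : G) (C : coset) :
  exists h, (fun x => g * x) @` sval C = lcoset h.
Proof.
case: C => C /= [h hC]; exists (g * h); rewrite hC.
apply/seteqP; split => x /=.
  by case=> y [k kS <-] <-; exists k => //; rewrite mulgA.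
by case=> k kS <-; exists (h * k); [exists k | rewrite mulgA].
Qed.
Definition cact (g : G) (C : coset) : coset :=
  exist _ ((fun x => g * x) @` sval C) (cact_proof g C).

Definition G0act (E : set coset) : set coset :=
  [set cact g0 e | g0 in stab & e in E].

Definition Gmm (m' : M) : set G := [set g | act g m0 = m'].
Lemma Gmm_coset (m' : M) : exists g, Gmm m' = lcoset g.
Proof.
exists (@cs_gsel G R m'); rewrite /Gmm /lcoset /stab; apply/seteqP; split => x /=.
  move=> hx; exists ((@cs_gsel G R m')^-1 * x).
    rewrite cs_actM hx -[in X in _ X = _](@cs_gselP G R m') -cs_actM.
    by rewrite mulVg cs_act1.
  by rewrite mulgA mulgV mul1g.
by case=> h hh <-; rewrite cs_actM hh cs_gselP.
Qed.
Definition cs_iota (m' : M) : coset := exist _ (Gmm m') (Gmm_coset m').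

(* right semi-action m <| g G_0 = g_{m0,m} g |> m0 (independent of the
   representative g since G_0 fixes m0) *)
Definition rsemi (m : M) (C : coset) : M := act (@cs_gsel G R m * crep C) m0.

Definition rpre (e : coset) (A : set M) : set M := [set m | A (rsemi m e)].

Definition rsemiset (m : M) (E : set coset) : set M := rsemi m @` E.

Definition actset (g : G) (A : set M) : set M := act g @` A.

Definition interiorE (E : set coset) (A : set M) : set M :=
  [set m | rsemiset m E `<=` A].
Definition closureE (E : set coset) (A : set M) : set M :=
  [set m | rsemiset m E `&` A !=set0].
Definition boundaryE (E : set coset) (A : set M) : set M :=
  closureE E A `\` interiorE E A.

End CellSpaceDefs.

Definition ncard (T : Type) (A : set T) : nat :=
  #|` fset_set (A : set {classic T}) |.

(* Main.v *)
Set Warnings "-notation-overridden,-notation-incompatible-prefix".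
Require Import Defs.
From HB Require Import structures.
From mathcomp Require Import all_boot monoid.
From mathcomp Require Import finmap boolp classical_sets cardinality.
Local Open Scope classical_set_scope.

Lemma count3 (T1 T2 T3 U : Type) (S1 : set T1) (S2 : set T2) (S3 : set T3)
  (B : set U) (F : T1 -> T2 -> T3 -> U) :
  finite_set S1 -> finite_set S2 -> finite_set S3 ->
  (forall u, B u -> exists x y z, [/\ S1 x, S2 y, S3 z & u = F x y z]) ->
  finite_set B /\ (ncard B <= ncard S1 * ncard S2 * ncard S3)%N.
Proof.
move=> f1 f2 f3 HB.
pose s1 := enum_fset (fset_set (S1 : set {classic T1})).
pose s2 := enum_fset (fset_set (S2 : set {classic T2})).
pose s3 := enum_fset (fset_set (S3 : set {classic T3})).
pose s23 : seq ({classic T2} * {classic T3})%type := [seq (y, z) | y <- s2, z <- s3].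
pose s : seq {classic U} :=
  [seq F x p.1 p.2 | x <- (s1 : seq {classic T1}), p <- s23].
have Bs : forall u, B u -> (u : {classic U}) \in s.
  move=> u /HB [x [y [z [h1 h2 h3 ->]]]].
  rewrite /s. have := @allpairsP {classic T1} ({classic T2} * {classic T3})%type {classic U} (fun x0 p => F x0 p.1 p.2) s1 s23 (F x y z). move=> HH. apply/HH; exists (x, (y, z)) => /=; split => //.
  - by change (x \in fset_set (S1 : set {classic T1})); rewrite (in_fset_set (T:={classic _})) //; apply: mem_set.
  - rewrite /s23. have := @allpairsP {classic T2} {classic T3} ({classic T2} * {classic T3})%type pair s2 s3 (y, z). move=> HH2. apply/HH2; exists (y, z) => /=; split => //.
    + by change (y \in fset_set (S2 : set {classic T2})); rewrite (in_fset_set (T:={classic _})) //; apply: mem_set.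
    + by change (z \in fset_set (S3 : set {classic T3})); rewrite (in_fset_set (T:={classic _})) //; apply: mem_set.
have fB : finite_set B.
  apply: (@sub_finite_set _ _ ([set` s] : set {classic U})).
    by move=> u /Bs.
  by apply/finite_seqP; exists s.
split => //.
rewrite /ncard -mulnA.
apply: (leq_trans (fsubset_leq_card (_ : fset_set (B : set {classic U}) `<=` [fset x in s])%fset)).
  by apply/fsubsetP => u; rewrite in_fset_set // inE => /Bs; rewrite inE.
rewrite card_fseq (leq_trans (size_undup _)) //.
by rewrite /s /s23 !size_allpairs.
Qed.

Local Open Scope group_scope.

Lemma actK (G : groupType) (R : cell_space G) g m :
  @cs_act _ R g^-1 (@cs_act _ R g m) = m.
Proof. by rewrite -cs_actM mulVg cs_act1. Qed.

Lemma actKV (G : groupType) (R : cell_space G) g m :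
  @cs_act _ R g (@cs_act _ R g^-1 m) = m.
Proof. by rewrite -cs_actM mulgV cs_act1. Qed.

Lemma crepP (G : groupType) (R : cell_space G) (C : coset R) :
  sval C = lcoset R (crep C).
Proof. by rewrite /crep; case: cid. Qed.

Lemma crep_in (G : groupType) (R : cell_space G) (C : coset R) :
  sval C (crep C).
Proof. rewrite crepP; exists 1; [by rewrite /stab /= cs_act1 | by rewrite mulg1]. Qed.

Lemma rsemiP (G : groupType) (R : cell_space G) (C : coset R) g m :
  sval C g -> rsemi m C = @cs_act _ R (cs_gsel m * g) (cs_m0 R).
Proof.
rewrite crepP => -[h hs <-].
rewrite /rsemi mulgA cs_actM [in RHS]cs_actM hs. by rewrite cs_actM.
Qed.

Lemma rsemiG0 (G : groupType) (R : cell_space G) m : rsemi m (G0 R) = m.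
Proof.
by rewrite (@rsemiP _ _ _ 1) ?mulg1 ?cs_gselP //= /stab /= cs_act1.
Qed.

Lemma rsemi_iota (G : groupType) (R : cell_space G) m a :
  rsemi m (@cs_iota _ R a) = @cs_act _ R (cs_gsel m) a.
Proof.
by rewrite (@rsemiP _ _ _ (cs_gsel a)) ?cs_actM ?cs_gselP //= /Gmm /= cs_gselP.
Qed.

Lemma Kshift (G : groupType) (R : cell_space G) k x :
  exists h, stab R h /\ forall e,
    @cs_act _ R k (rsemi x e) = rsemi (@cs_act _ R k x) (cact h e).
Proof.
exists ((cs_gsel (@cs_act _ R k x))^-1 * (k * cs_gsel x)); split.
  rewrite /stab /= cs_actM cs_actM cs_gselP.
  by rewrite -{2}(cs_gselP (@cs_act _ R k x)) actK.
move=> e; rewrite (@rsemiP _ _ (cact _ e) (((cs_gsel (@cs_act _ R k x))^-1 * (k * cs_gsel x)) * crep e)).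
  by rewrite /rsemi -cs_actM !mulgA mulgV mul1g.
by exists (crep e); [exact: crep_in | rewrite mulgA].
Qed.

Lemma shift (G : groupType) (R : cell_space G) (E : set (coset R)) k x e :
  G0act E `<=` E -> E e ->
  exists2 e', E e' & @cs_act _ R k (rsemi x e) = rsemi (@cs_act _ R k x) e'.
Proof.
move=> sE Ee; have [h [hs hK]] := @Kshift G R k x.
exists (cact h e); last exact: hK.
by apply: sE; exists h => //; exists e.
Qed.

Lemma intE (G : groupType) (R : cell_space G) (E : set (coset R)) (A : set (cs_M R)) (x : cs_M R) :
  interiorE E A x <-> forall e, E e -> A (rsemi x e).
Proof.
split; first by move=> H e Ee; apply: H; exists e.
by move=> H y [e Ee <-]; apply: H.
Qed.

Lemma cloE (G : groupType) (R : cell_space G) (E : set (coset R)) (A : set (cs_M R)) (x : cs_M R) :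
  closureE E A x <-> exists2 e, E e & A (rsemi x e).
Proof.
split; first by move=> [y [[e Ee <-] Ay]]; exists e.
by move=> [e Ee Ay]; exists (rsemi x e); split => //; exists e.
Qed.

Lemma actsetE (G : groupType) (R : cell_space G) g (S : set (cs_M R)) :
  actset g S = [set y | S (@cs_act _ R g^-1 y)].
Proof.
apply/seteqP; split => y /=.
  by case=> s Ss <-; rewrite actK.
by move=> Sy; exists (@cs_act _ R g^-1 y) => //; rewrite actKV.
Qed.

Lemma int_act (G : groupType) (R : cell_space G) (E : set (coset R))
  (A : set (cs_M R)) g x : G0act E `<=` E ->
  interiorE E [set y | A (@cs_act _ R g^-1 y)] x <-> interiorE E A (@cs_act _ R g^-1 x).
Proof.
move=> sE; rewrite !intE; split.
  move=> H e Ee; have [e' Ee' He'] := @shift _ R E g (@cs_act _ R g^-1 x) e sE Ee.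
  rewrite actKV in He'; have := H e' Ee'; rewrite /= -He' actK //.
move=> H e Ee /=; have [e' Ee' ->] := @shift _ R E g^-1 x e sE Ee; exact: H.
Qed.

Lemma clo_act (G : groupType) (R : cell_space G) (E : set (coset R))
  (A : set (cs_M R)) g x : G0act E `<=` E ->
  closureE E [set y | A (@cs_act _ R g^-1 y)] x <-> closureE E A (@cs_act _ R g^-1 x).
Proof.
move=> sE; rewrite !cloE; split.
  move=> [e Ee /=]; have [e' Ee' ->] := @shift _ R E g^-1 x e sE Ee => Ae.
  by exists e'.
move=> [e Ee Ae]; have [e' Ee' He'] := @shift _ R E g (@cs_act _ R g^-1 x) e sE Ee.
rewrite actKV in He'; exists e' => //=; by rewrite -He' actK.
Qed.

Lemma part8 (G : groupType) (R : cell_space G) (E : set (coset R))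
  (A : set (cs_M R)) g : G0act E `<=` E ->
    [/\ actset g (interiorE E A) = interiorE E (actset g A),
        actset g (closureE E A) = closureE E (actset g A)
      & actset g (boundaryE E A) = boundaryE E (actset g A)].
Proof.
move=> sE; rewrite !actsetE; split; apply/seteqP; split => x /=.
- by move/(@int_act _ R E A g x sE).
- by move/(@int_act _ R E A g x sE).
- by move/(@clo_act _ R E A g x sE).
- by move/(@clo_act _ R E A g x sE).
- by move=> [c ni]; split; [apply/(@clo_act _ R E A g x sE) | move/(@int_act _ R E A g x sE)].
- by move=> [c ni]; split; [apply/(@clo_act _ R E A g x sE) | move/(@int_act _ R E A g x sE)].
Qed.

Lemma iota_act (G : groupType) (R : cell_space G) m (S : set (cs_M R)) :
  rsemiset m (@cs_iota _ R @` S) = actset (cs_gsel m) S.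
Proof.
rewrite /rsemiset /actset; apply/seteqP; split => y /=.
  by case=> c [a Sa <-] <-; exists a => //; rewrite rsemi_iota.
by case=> a Sa <-; exists (cs_iota a); [exists a | exact: rsemi_iota].
Qed.

Local Close Scope group_scope.

Theorem lemma1 (G : groupType) (R : cell_space G) (A : set (cs_M R))
    (e : coset R) (E E' : set (coset R)) :
  (* (1) *)
  [/\ interiorE [set G0 R] A = A, closureE [set G0 R] A = A
    & boundaryE [set G0 R] A = set0] /\
  (* (2) *)
  [/\ interiorE ([set G0 R] `|` [set e]) A = A `&` rpre e A,
      closureE ([set G0 R] `|` [set e]) A = A `|` rpre e A
    & boundaryE ([set G0 R] `|` [set e]) A
        = (A `\` rpre e A) `|` (rpre e A `\` A)] /\
  (* (3) *)
  (interiorE E (~` A) = ~` closureE E A /\ closureE E (~` A) = ~` interiorE E A) /\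
  (* (4) *)
  (E `<=` E' ->
    [/\ interiorE E' A `<=` interiorE E A, closureE E A `<=` closureE E' A
      & boundaryE E A `<=` boundaryE E' A]) /\
  (* (5) *)
  (E (G0 R) -> interiorE E A `<=` A /\ A `<=` closureE E A) /\
  (* (6) *)
  (E (G0 R) -> finite_set A -> finite_set (interiorE E A)) /\
  (* (7) *)
  (finite_set (stab R) -> finite_set A -> finite_set E ->
    [/\ finite_set (closureE E A), finite_set (boundaryE E A)
      & (ncard (closureE E A) <= ncard (stab R) * ncard A * ncard E)%N]) /\
  (* (8) *)
  (forall g : G, G0act E `<=` E ->
    [/\ actset g (interiorE E A) = interiorE E (actset g A),
        actset g (closureE E A) = closureE E (actset g A)
      & actset g (boundaryE E A) = boundaryE E (actset g A)]) /\
  (* (9) *)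
  (forall m : cs_M R, G0act E `<=` E ->
    [/\ rsemiset m (@cs_iota G R @` interiorE E A)
          = interiorE E (rsemiset m (@cs_iota G R @` A)),
        rsemiset m (@cs_iota G R @` closureE E A)
          = closureE E (rsemiset m (@cs_iota G R @` A))
      & rsemiset m (@cs_iota G R @` boundaryE E A)
          = boundaryE E (rsemiset m (@cs_iota G R @` A))]).
Proof.
have P5 : E (G0 R) -> interiorE E A `<=` A /\ A `<=` closureE E A.
  move=> E0; split => x.
    by move/intE => H; have := H _ E0; rewrite rsemiG0.
  by move=> Ax; apply/cloE; exists (G0 R) => //; rewrite rsemiG0.
split.
  have h1 : interiorE [set G0 R] A = A.
    apply/seteqP; split => x /=.
      by move/intE => H; have := H (G0 R) erefl; rewrite rsemiG0.
    by move=> Ax; apply/intE => e0 ->; rewrite rsemiG0.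
  have h2 : closureE [set G0 R] A = A.
    apply/seteqP; split => x /=.
      by move/cloE => [e0 -> ]; rewrite rsemiG0.
    by move=> Ax; apply/cloE; exists (G0 R) => //; rewrite rsemiG0.
  by split => //; rewrite /boundaryE h1 h2 setDv.
split.
  have h1 : interiorE ([set G0 R] `|` [set e]) A = A `&` rpre e A.
    apply/seteqP; split => x /=.
      move/intE => H; have := H (G0 R) (or_introl erefl); rewrite rsemiG0 => Ax.
      by split => //; apply: H; right.
    by move=> [Ax Ae]; apply/intE => e0 [->|->] //; rewrite rsemiG0.
  have h2 : closureE ([set G0 R] `|` [set e]) A = A `|` rpre e A.
    apply/seteqP; split => x /=.
      by move/cloE => [e0 [->|->] Ae]; [left; rewrite rsemiG0 in Ae | right].
    move=> [Ax|Ae]; apply/cloE.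
      by exists (G0 R); [left | rewrite rsemiG0].
    by exists e; [right|].
  split => //; rewrite /boundaryE h1 h2.
  apply/seteqP; split => x /=.
    move=> [[Ax|Px] n]; [left | right]; split => // H; apply: n; by split.
  by move=> [[Ax nP]|[Px nA]]; split; [left | case | right | case].
split.
  split; apply/seteqP; split => x /=.
  - by move/intE => H /cloE [e0 Ee Ae]; exact: H e0 Ee Ae.
  - by move=> nc; apply/intE => e0 Ee Ae; apply: nc; apply/cloE; exists e0.
  - by move/cloE => [e0 Ee nA] /intE H; exact: nA (H e0 Ee).
  - move=> ni; have [//|nc] := pselect (closureE E (~` A) x).
    exfalso; apply: ni; apply/intE => e0 Ee.
    have [//|nA] := pselect (A (rsemi x e0)).
    by exfalso; apply: nc; apply/cloE; exists e0.
split.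
  move=> sub.
  have hi : interiorE E' A `<=` interiorE E A.
    by move=> x /intE H; apply/intE => e0 Ee; exact: H e0 (sub e0 Ee).
  have hc : closureE E A `<=` closureE E' A.
    by move=> x /cloE [e0 Ee Ae]; apply/cloE; exists e0 => //; exact: sub.
  split => // x [c ni]; split; [exact: hc | move=> i; apply: ni; exact: hi].
split => //.
split.
  by move=> E0 fA; apply: sub_finite_set fA; exact: (P5 E0).1.
split.
  move=> fS fA fE.
  pose F := (fun (h : G) (a : cs_M R) (e0 : coset R) => @cs_act _ R (cs_gsel a * h * (crep e0)^-1)%g (cs_m0 R)).
  have cov : forall u, closureE E A u -> exists h a e1,
      [/\ stab R h, A a, E e1 & u = F h a e1].
    move=> u /cloE [e0 Ee Ae].
    exists ((cs_gsel (rsemi u e0))^-1 * (cs_gsel u * crep e0))%g, (rsemi u e0), e0.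
    split => //.
      rewrite /stab /= cs_actM.
      change (@cs_act _ R (cs_gsel (rsemi u e0))^-1%g (rsemi u e0) = cs_m0 R).
      by rewrite -{2}(cs_gselP (rsemi u e0)) actK.
    by rewrite /F mulVKg mulgK cs_gselP.
  have [fc hc] := @count3 _ _ _ _ _ _ _ _ F fS fA fE cov.
  split => //; apply: sub_finite_set fc; by move=> x [].
split.
  by move=> g sE; exact: part8.
by move=> m sE; rewrite !iota_act; exact: part8.
Qed.
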